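(* Let $\Sigma$ be an $n\times n$ positive definite matrix and $\Omega=\Sigma^{-1}$. Suppose there is $\alpha\neq 0$ such that $\Sigma_{i,n-1}=\alpha\,\Sigma_{i,n}$ for all $i\neq n-1$. Then in the conditional independence structure of $\Sigma$, node $n-1$ is a leaf connected to node $n$; that is, $\Omega_{n-1,i}=0$ for all $i\notin\{n-1,n\}$ and $\Omega_{n-1,n}\neq 0$.
   Context: The conditional independence structure of a positive definite $\Sigma$ is the graph on $\{1,\dots,n\}$ with an edge $\{i,j\}$ ($i\neq j$) iff $(\Sigma^{-1})_{ij}\neq 0$. *)

(* Defs.v *)
From mathcomp Require Import all_boot all_order all_algebra.
Set Implicit Arguments. Unset Strict Implicit. Unset Printing Implicit Defensive.
Import Order.TTheory GRing.Theory Num.Theory.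
Local Open Scope ring_scope.

Definition posdef (R : realFieldType) (n : nat) (S : 'M[R]_n) : Prop :=
  S^T = S /\ forall x : 'cV[R]_n, x != 0 -> 0 < (x^T *m S *m x) 0 0.

Definition ci_edge (R : realFieldType) (n : nat) (S : 'M[R]_n) (i j : 'I_n) : Prop :=
  i != j /\ invmx S i j != 0.

(* Main.v *)
Require Import Defs.
From mathcomp Require Import all_boot all_order all_algebra ring.
Import Order.TTheory GRing.Theory Num.Theory.
Local Open Scope ring_scope.

Lemma pd_quad {R : realFieldType} {n} {S : 'M[R]_n} {u : 'rV[R]_n} :
  posdef S -> u *m S = 0 -> u = 0.
Proof.
move=> [_ pd] uS; apply/eqP; apply/negPn/negP => u0.
have := pd u^T; rewrite trmx_eq0 trmxK uS mul0mx mxE ltxx => /(_ u0).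
by [].
Qed.

Lemma pd_unit {R : realFieldType} {n} {S : 'M[R]_n} : posdef S -> S \in unitmx.
Proof.
move=> pd; rewrite unitmxE unitfE; apply/negP => /det0P [v v0 vS].
by move: v0; rewrite (pd_quad pd vS) eqxx.
Qed.

Theorem lemma1 (R : realFieldType) (m : nat) (S : 'M[R]_m.+2) (alpha : R) :
  posdef S -> alpha != 0 ->
  (forall i : 'I_m.+2, i != inord m -> S i (inord m) = alpha * S i ord_max) ->
  (forall i : 'I_m.+2, i != inord m -> i != ord_max -> invmx S (inord m) i = 0)
  /\ invmx S (inord m) ord_max != 0.
Proof.
move=> pd a0 H.
set k := (inord m : 'I_m.+2). set l := (ord_max : 'I_m.+2).
have kl : k != l by rewrite -val_eqE /= inordK // neq_ltn ltnSn.
have symS : forall i j, S i j = S j i.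
  by move=> i j; case: pd => /matrixP e _; rewrite -e mxE.
set u : 'rV[R]_m.+2 := delta_mx 0 k - alpha *: delta_mx 0 l.
set c := S k k - alpha * S l k.
have uS : u *m S = c *: delta_mx 0 k.
  apply/matrixP => i j; rewrite /u !mxE (ord1 i).
  rewrite (bigD1 k) //= (bigD1 l) /=; last by rewrite eq_sym.
  rewrite big1; last first.
    move=> p /andP [pk pl]; rewrite !mxE (negbTE pk) (negbTE pl) /=.
    by rewrite ?andbF ?mulr0 ?subr0 mul0r.
  rewrite !mxE !eqxx (negbTE kl) eq_sym (negbTE kl) /=.
  case: (eqVneq j k) => [->|jk];  first by rewrite /= /c; ring.
  rewrite /= (symS k j) (H j jk) (symS j l); ring.
have c0 : c != 0.
  apply/eqP => c0; move: uS; rewrite c0 scale0r => /(pd_quad pd) /matrixP /(_ 0 k).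
  rewrite /u !mxE !eqxx; case: (k =P l) => [e|_]; first by rewrite e eqxx in kl.
  by rewrite /= mulr0 subr0 => /eqP; rewrite oner_eq0.
have uE : u = c *: row k (invmx S).
  by rewrite -(mulmxK (pd_unit pd) u) uS -scalemxAl rowE.
have Hu : forall i, invmx S k i = u 0 i / c.
  by move=> i; rewrite uE !mxE mulrC mulKf.
split.
  move=> i ik il; rewrite Hu !mxE !eqxx /=; case: (i =P k) ik => // _ _; case: (i =P l) il => // _ _.
  by rewrite /= mulr0 subr0 mul0r.
rewrite Hu !mxE !eqxx; case: (l =P k) => [e|_]; first by rewrite e eqxx in kl.
by rewrite /= mulr1 sub0r mulf_eq0 invr_eq0 (negbTE c0) orbF oppr_eq0.
Qed.
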